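(* Let $\mathbf{T}\subset\mathbb{S}^3$ be a $\mathbb{Z}_2$-symmetric spherical tetrahedron with dihedral angles $A$, $B=E$, $C=F$, $D$ and edge lengths $l_A$, $l_B=l_E$, $l_C=l_F$, $l_D$, edge matrix $G^\star$ and Gram matrix $G$. Put $\Delta=\det G$, $\Delta^\star=\det G^\star$, and $$u=\sqrt{\frac{c^\star_{00}c^\star_{22}}{\Delta^\star}},\qquad v=\sqrt{\frac{c_{00}c_{22}}{\Delta}}.$$ Then $$u=\frac{\sin\frac{l_A+l_D}{2}}{\sin\frac{A+D}{2}}=\frac{\sin\frac{l_A-l_D}{2}}{\sin\frac{D-A}{2}}=\frac{\sin l_B}{\sin B}=\frac{\sin l_C}{\sin C}=v^{-1}.$$
   Context: A spherical tetrahedron $\mathbf{T}\subset\mathbb{S}^3\subset\mathbb{R}^4$ is the intersection of $\mathbb{S}^3$ with the cone over four linearly independent unit vectors $\mathrm{p}_0,\dots,\mathrm{p}_3$ (its vertices). Edge lengths $l_{ij}\in[0,\pi]$: $\cos l_{ij}=\langle \mathrm{p}_i,\mathrm{p}_j\rangle$; with $\mathrm{v}_i$ the outer unit normal to the face opposite $\mathrm{p}_i$, dihedral angles $\alpha_{ij}\in[0,\pi]$: $\cos\alpha_{ij}=-\langle\mathrm{v}_i,\mathrm{v}_j\rangle$. Notation: $l_A=l_{01}$, $l_B=l_{02}$, $l_C=l_{03}$, $l_D=l_{23}$, $l_E=l_{13}$, $l_F=l_{12}$, and $A,\dots,F$ are the dihedral angles along the edges of lengths $l_A,\dots,l_F$.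 The edge matrix is $G^\star=\begin{pmatrix}1&\cos l_A&\cos l_B&\cos l_C\\ \cos l_A&1&\cos l_F&\cos l_E\\ \cos l_B&\cos l_F&1&\cos l_D\\ \cos l_C&\cos l_E&\cos l_D&1\end{pmatrix}$ and the Gram matrix is $G=\begin{pmatrix}1&-\cos D&-\cos E&-\cos F\\ -\cos D&1&-\cos C&-\cos B\\ -\cos E&-\cos C&1&-\cos A\\ -\cos F&-\cos B&-\cos A&1\end{pmatrix}$ (rows/columns indexed $0,\dots,3$). $c_{ij}$ and $c^\star_{ij}$ denote the $(i,j)$-cofactors $(-1)^{i+j}\det(\text{minor})$ of $G$ and $G^\star$. $\mathbf{T}$ is $\mathbb{Z}_2$-symmetric if it is invariant under the rotation through $\pi$ about the axis through the midpoints of the edges $\mathrm{p}_0\mathrm{p}_1$ and $\mathrm{p}_2\mathrm{p}_3$; then $l_B=l_E$, $l_C=l_F$, $B=E$, $C=F$. The number $u$ is called the principal parameter and $v$ the dual parameter of $\mathbf{T}$. *)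

(* Defs.v *)
From mathcomp Require Import all_boot all_order all_algebra.
From mathcomp Require Import all_classical all_reals all_analysis.
Set Implicit Arguments. Unset Strict Implicit. Unset Printing Implicit Defensive.
Import Order.TTheory GRing.Theory Num.Theory.
Local Open Scope ring_scope.

Definition i0 : 'I_4 := @Ordinal 4 0 isT.
Definition i1 : 'I_4 := @Ordinal 4 1 isT.
Definition i2 : 'I_4 := @Ordinal 4 2 isT.
Definition i3 : 'I_4 := @Ordinal 4 3 isT.

Section Tet.
Variable R : realType.

Definition dotv (x y : 'rV[R]_4) : R := (x *m y^T) 0 0.

Definition spherical_tetrahedron (p : 'I_4 -> 'rV[R]_4) : Prop :=
  (forall i, dotv (p i) (p i) = 1) /\ \det (\matrix_(i, j) p i 0 j) != 0.

Definition outer_unit_normal (p v : 'I_4 -> 'rV[R]_4) (i : 'I_4) : Prop :=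
  [/\ dotv (v i) (v i) = 1,
      (forall j, j != i -> dotv (v i) (p j) = 0) &
      dotv (v i) (p i) < 0].

Definition edge_len (p : 'I_4 -> 'rV[R]_4) (i j : 'I_4) : R :=
  acos (dotv (p i) (p j)).

Definition dihedral (v : 'I_4 -> 'rV[R]_4) (i j : 'I_4) : R :=
  acos (- dotv (v i) (v j)).

(* Z_2-symmetry: invariance under the rotation through pi about the axis
   through the midpoints of p0p1 and p2p3, i.e. an orthogonal map of R^4
   swapping p0 <-> p1 and p2 <-> p3. *)
Definition Z2_symmetric (p : 'I_4 -> 'rV[R]_4) : Prop :=
  exists M : 'M[R]_4, M *m M^T = 1%:M /\
    [/\ p i0 *m M = p i1, p i1 *m M = p i0, p i2 *m M = p i3 & p i3 *m M = p i2].

Definition edge_matrix (p : 'I_4 -> 'rV[R]_4) : 'M[R]_4 :=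
  \matrix_(i, j) (if i == j then 1 else cos (edge_len p i j)).

Definition gram_matrix (v : 'I_4 -> 'rV[R]_4) : 'M[R]_4 :=
  \matrix_(i, j) (if i == j then 1 else - cos (dihedral v i j)).

End Tet.

(* Main.v *)
Require Import Defs.
From mathcomp Require Import all_boot all_order all_algebra.
From mathcomp Require Import all_classical all_reals all_analysis.
From mathcomp Require Import ring lra.
Import Order.TTheory GRing.Theory Num.Theory.
Local Open Scope ring_scope.

Section S.
Variable R : realType.

Lemma det2f (f : nat -> nat -> R) :
  \det (\matrix_(i < 2, j < 2) f i j) = f 0 0 * f 1 1 - f 0 1 * f 1 0.
Proof.
rewrite (expand_det_row _ 0) !big_ord_recl big_ord0 /cofactor !det_mx11 /=.
rewrite !mxE /= expr0 expr1; ring.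
Qed.

Lemma det3f (f : nat -> nat -> R) :
  \det (\matrix_(i < 3, j < 3) f i j) =
   f 0 0 * (f 1 1 * f 2 2 - f 1 2 * f 2 1)
 - f 0 1 * (f 1 0 * f 2 2 - f 1 2 * f 2 0)
 + f 0 2 * (f 1 0 * f 2 1 - f 1 1 * f 2 0).
Proof.
rewrite (expand_det_row _ 0) !big_ord_recl big_ord0 /cofactor.
have E : forall (i j : 'I_3), row' i (col' j (\matrix_(i < 3, j < 3) f i j)) =
  \matrix_(k < 2, l < 2) f (bump i k) (bump j l).
  by move=> i j; apply/matrixP => k l; rewrite !mxE.
have E2 : forall (i j : 'I_3), \det (row' i (col' j (\matrix_(i < 3, j < 3) f i j))) =
  f (bump i 0) (bump j 0) * f (bump i 1) (bump j 1) - f (bump i 0) (bump j 1) * f (bump i 1) (bump j 0).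
  by move=> i j; rewrite E (det2f (fun x y => f (bump i x) (bump j y))).
rewrite !E2 !mxE /= !expr0 !expr1 ?expr2; ring.
Qed.

Lemma cof4 (f : nat -> nat -> R) (i j : 'I_4) :
  cofactor (\matrix_(i < 4, j < 4) f i j) i j =
  (-1) ^+ (i + j)%N * (let g := fun x y => f (bump i x) (bump j y) in
   g 0 0 * (g 1 1 * g 2 2 - g 1 2 * g 2 1)
 - g 0 1 * (g 1 0 * g 2 2 - g 1 2 * g 2 0)
 + g 0 2 * (g 1 0 * g 2 1 - g 1 1 * g 2 0)).
Proof.
rewrite /cofactor -(det3f (fun x y => f (bump i x) (bump j y))); congr (_ * \det _).
by apply/matrixP => k l; rewrite !mxE.
Qed.

Lemma det4 (f : nat -> nat -> R) :
  \det (\matrix_(i < 4, j < 4) f i j) =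
  \sum_(j < 4) f 0 j * cofactor (\matrix_(i < 4, j < 4) f i j) 0 j.
Proof.
rewrite (expand_det_row _ 0); apply: eq_bigr => j _; by rewrite mxE.
Qed.

Definition qf (a b c d : R) (i j : nat) : R :=
  match i, j with
  | 0, 1 | 1, 0 => a
  | 0, 2 | 2, 0 | 1, 3 | 3, 1 => b
  | 0, 3 | 3, 0 | 1, 2 | 2, 1 => c
  | 2, 3 | 3, 2 => d
  | _, _ => 1 end.

Definition Qs a b c d := \matrix_(i < 4, j < 4) qf a b c d i j.

Lemma Qs_sym a b c d (Q := Qs a b c d) :
  [/\ cofactor Q i3 i2 = cofactor Q i2 i3, cofactor Q i1 i0 = cofactor Q i0 i1,
      cofactor Q i3 i1 = cofactor Q i1 i3 & cofactor Q i2 i1 = cofactor Q i1 i2].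
Proof.
rewrite /Q /Qs !cof4 /=.
split; ring.
Qed.

Lemma Qs_ids a b c d (Q := Qs a b c d) (D := \det Q) :
  [/\ cofactor Q i1 i1 = cofactor Q i0 i0, cofactor Q i3 i3 = cofactor Q i2 i2,
      cofactor Q i1 i1 * cofactor Q i3 i3 - cofactor Q i1 i3 ^+ 2 = D * (1 - b ^+ 2),
      cofactor Q i1 i1 * cofactor Q i2 i2 - cofactor Q i1 i2 ^+ 2 = D * (1 - c ^+ 2) &
      [/\ cofactor Q i2 i2 * cofactor Q i3 i3 - cofactor Q i2 i3 ^+ 2 = D * (1 - a ^+ 2),
      cofactor Q i0 i0 * cofactor Q i1 i1 - cofactor Q i0 i1 ^+ 2 = D * (1 - d ^+ 2),
      cofactor Q i0 i0 * cofactor Q i2 i2 - cofactor Q i0 i1 * cofactor Q i2 i3 = D * (1 - a * d) &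
      cofactor Q i0 i1 * cofactor Q i2 i2 - cofactor Q i2 i3 * cofactor Q i0 i0 = D * (d - a)]].
Proof.
rewrite /D /Q /Qs det4 !big_ord_recl big_ord0 !cof4 /= !expr0 !expr1 ?expr2 /=.
split; [ring|ring|ring|ring|split; ring].
Qed.

Lemma key n (X Y : 'M[R]_n.+1) (d : 'rV[R]_n.+1) :
  X *m Y^T = diag_mx d -> \det Y != 0 ->
  \det (Y *m Y^T) *: (X *m X^T) = diag_mx d *m \adj (Y *m Y^T) *m diag_mx d.
Proof.
move=> HXY HY.
set Q := Y *m Y^T; set D := \det Q.
have HD : D != 0 by rewrite /D /Q det_mulmx det_tr mulf_neq0.
have H1 : Y *m (D^-1 *: (Y^T *m \adj Q)) = 1%:M.
  by rewrite -scalemxAr mulmxA mul_mx_adj scale_scalar_mx mulVf.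
have H2 := mulmx1C H1.
have H3 : Y^T *m \adj Q *m Y = D%:M.
  rewrite -[Y^T *m _ *m Y]scale1r -(mulfV HD) -scalerA scalemxAl H2.
  by rewrite scale_scalar_mx mulr1.
have HYX : Y *m X^T = diag_mx d by rewrite -tr_diag_mx -HXY trmx_mul trmxK.
rewrite -{1}HXY -HYX !mulmxA -(mulmxA X) -(mulmxA X) H3.
by rewrite mul_mx_scalar scalemxAl.
Qed.
Implicit Types x y : R.

Lemma sqr_eq x y : 0 <= x -> 0 <= y -> x ^+ 2 = y ^+ 2 -> x = y.
Proof. by move=> hx hy h; apply/eqP; rewrite -(eqrXn2 (n:=2)) // h. Qed.

Lemma acos_in x : x ^+ 2 < 1 -> 0 < acos x < pi.
Proof.
move=> h; rewrite acos_gt0 ?acos_ltpi //; apply/andP; split; nra.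
Qed.

Lemma cos_acos' x : x ^+ 2 <= 1 -> cos (acos x) = x.
Proof. by move=> h; rewrite acosK // in_itv /=; apply/andP; split; nra. Qed.

Lemma sin_acos' x : x ^+ 2 <= 1 -> sin (acos x) = Num.sqrt (1 - x ^+ 2).
Proof. by move=> h; rewrite sin_acos //; apply/andP; split; nra. Qed.

Lemma half_pos x y : 0 < x < pi -> 0 < y < pi -> 0 < sin ((x + y) / 2).
Proof.
move=> /andP[h1 h2] /andP[h3 h4]; apply: sin_gt0_pi; apply/andP; split; lra.
Qed.

Lemma sin_half_sq (t : R) : sin (t / 2) ^+ 2 = (1 - cos t) / 2.
Proof.
rewrite {2}(splitr t) cosD -expr2 -expr2 cos2sin2; lra.
Qed.

Lemma sin_prod (s t : R) : sin s * sin t = (cos (s - t) - cos (s + t)) / 2.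
Proof. rewrite cosB cosD; lra. Qed.

Lemma alg (a b c d cA cB cC cD D k e0 e2 u w : R) :
  a ^+ 2 < 1 -> b ^+ 2 < 1 -> c ^+ 2 < 1 -> d ^+ 2 < 1 ->
  0 < D -> 0 < k -> k = e0 * e2 ->
  D * (1 - cB ^+ 2) = k ^+ 2 * (1 - b ^+ 2) ->
  D * (1 - cC ^+ 2) = k ^+ 2 * (1 - c ^+ 2) ->
  D * (1 - cA ^+ 2) = e2 ^+ 4 * (1 - a ^+ 2) ->
  D * (1 - cD ^+ 2) = e0 ^+ 4 * (1 - d ^+ 2) ->
  D * (1 - cA * cD) = k ^+ 2 * (1 - a * d) ->
  D * (cA - cD) = k ^+ 2 * (d - a) ->
  0 <= u -> u ^+ 2 = D / k ^+ 2 -> 0 <= w -> w ^+ 2 = k ^+ 2 / D ->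
  let lA := acos a in let lB := acos b in let lC := acos c in let lD := acos d in
  let A := acos cA in let B := acos cB in let C := acos cC in let Dd := acos cD in
  [/\ u = sin ((lA + lD) / 2) / sin ((A + Dd) / 2),
      u * sin ((Dd - A) / 2) = sin ((lA - lD) / 2),
      u = sin lB / sin B,
      u = sin lC / sin C &
      u = w^-1].
Proof.
move=> ha hb hc hd hD hk hke h1 h2 h3 h4 h5 h6 hu hu2 hw hw2 lA lB lC lD A B C Dd.
have hk2 : 0 < k ^+ 2 by rewrite exprn_gt0.
have he0 : e0 != 0 by apply/eqP => e; move: hk; rewrite hke e mul0r ltxx.
have he2 : e2 != 0 by apply/eqP => e; move: hk; rewrite hke e mulr0 ltxx.
have he04 : 0 < e0 ^+ 4 by rewrite exprn_even_gt0.
have he24 : 0 < e2 ^+ 4 by rewrite exprn_even_gt0.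
have hcA : cA ^+ 2 < 1.
  have : 0 < D * (1 - cA ^+ 2) by rewrite h3 mulr_gt0 // subr_gt0.
  by rewrite pmulr_rgt0 // subr_gt0.
have hcB : cB ^+ 2 < 1.
  have : 0 < D * (1 - cB ^+ 2) by rewrite h1 mulr_gt0 // subr_gt0.
  by rewrite pmulr_rgt0 // subr_gt0.
have hcC : cC ^+ 2 < 1.
  have : 0 < D * (1 - cC ^+ 2) by rewrite h2 mulr_gt0 // subr_gt0.
  by rewrite pmulr_rgt0 // subr_gt0.
have hcD : cD ^+ 2 < 1.
  have : 0 < D * (1 - cD ^+ 2) by rewrite h4 mulr_gt0 // subr_gt0.
  by rewrite pmulr_rgt0 // subr_gt0.
set r := Num.sqrt D.
have hr : 0 < r by rewrite sqrtr_gt0.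
have hr2 : r ^+ 2 = D by rewrite sqr_sqrtr // ltW.
have sA : sin A = e2 ^+ 2 * sin lA / r.
  rewrite /A /lA !sin_acos' ?ltW //; apply: sqr_eq.
  - exact: sqrtr_ge0.
  - apply: divr_ge0; [apply: mulr_ge0; [exact: sqr_ge0|exact: sqrtr_ge0]|exact: ltW].
  rewrite expr_div_n exprMn -exprM !sqr_sqrtr ?subr_ge0 ?ltW //.
  by apply: (mulfI (lt0r_neq0 hD)); rewrite h3 [D * _]mulrC divfK ?lt0r_neq0.
have sD : sin Dd = e0 ^+ 2 * sin lD / r.
  rewrite /Dd /lD !sin_acos' ?ltW //; apply: sqr_eq.
  - exact: sqrtr_ge0.
  - apply: divr_ge0; [apply: mulr_ge0; [exact: sqr_ge0|exact: sqrtr_ge0]|exact: ltW].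
  rewrite expr_div_n exprMn -exprM !sqr_sqrtr ?subr_ge0 ?ltW //.
  by apply: (mulfI (lt0r_neq0 hD)); rewrite h4 [D * _]mulrC divfK ?lt0r_neq0.
have hD0 : D != 0 := lt0r_neq0 hD.
have hk0 : k != 0 := lt0r_neq0 hk.
have ia := acos_in _ ha; have ib := acos_in _ hb; have ic := acos_in _ hc; have id := acos_in _ hd.
have iA := acos_in _ hcA; have iB := acos_in _ hcB; have iC := acos_in _ hcC; have iD := acos_in _ hcD.
have sqpos : forall x, x ^+ 2 < 1 -> 0 < Num.sqrt (1 - x ^+ 2) /\ Num.sqrt (1 - x ^+ 2) ^+ 2 = 1 - x ^+ 2.
  by move=> x hx; rewrite sqrtr_gt0 subr_gt0 hx sqr_sqrtr // subr_ge0 ltW.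
have [sa_pos sa2] := sqpos a ha; have [sb_pos sb2] := sqpos b hb.
have [sc_pos sc2] := sqpos c hc; have [sd_pos sd2] := sqpos d hd.
have [sB_pos sB2] := sqpos cB hcB; have [sC_pos sC2] := sqpos cC hcC.
have slA : sin lA = Num.sqrt (1 - a ^+ 2) by rewrite sin_acos' ?ltW.
have slB : sin lB = Num.sqrt (1 - b ^+ 2) by rewrite sin_acos' ?ltW.
have slC : sin lC = Num.sqrt (1 - c ^+ 2) by rewrite sin_acos' ?ltW.
have slD : sin lD = Num.sqrt (1 - d ^+ 2) by rewrite sin_acos' ?ltW.
have sBe : sin B = Num.sqrt (1 - cB ^+ 2) by rewrite sin_acos' ?ltW.
have sCe : sin C = Num.sqrt (1 - cC ^+ 2) by rewrite sin_acos' ?ltW.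
have clA : cos lA = a by rewrite cos_acos' ?ltW.
have clD : cos lD = d by rewrite cos_acos' ?ltW.
have cAe : cos A = cA by rewrite cos_acos' ?ltW.
have cDe : cos Dd = cD by rewrite cos_acos' ?ltW.
have Xpos : 0 < sin ((lA + lD) / 2) by apply: half_pos.
have Ypos : 0 < sin ((A + Dd) / 2) by apply: half_pos.
have h5' : 1 - cA * cD = k ^+ 2 * (1 - a * d) / D by rewrite -h5 [D * _]mulrC mulfK.
have h6' : cA - cD = k ^+ 2 * (d - a) / D by rewrite -h6 [D * _]mulrC mulfK.
have uYX : u * sin ((A + Dd) / 2) = sin ((lA + lD) / 2).
  apply: sqr_eq; [by rewrite mulr_ge0 // ltW | exact: ltW |].
  rewrite exprMn !sin_half_sq cosD cosD clA clD cAe cDe sA sD slA slD hu2.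
  have -> : 1 - (cA * cD - e2 ^+ 2 * Num.sqrt (1 - a ^+ 2) / r * (e0 ^+ 2 * Num.sqrt (1 - d ^+ 2) / r))
     = (1 - cA * cD) + e2 ^+ 2 * e0 ^+ 2 * Num.sqrt (1 - a ^+ 2) * Num.sqrt (1 - d ^+ 2) / r ^+ 2.
    by rewrite expr2; field; rewrite lt0r_neq0.
  rewrite h5' hr2 hke; by field; rewrite hD0 he2 he0.
have e1 : u = sin ((lA + lD) / 2) / sin ((A + Dd) / 2).
  by rewrite -uYX mulfK // lt0r_neq0.
have XW : sin ((lA + lD) / 2) * sin ((lA - lD) / 2) = (d - a) / 2.
  rewrite sin_prod.
  have -> : (lA + lD) / 2 - (lA - lD) / 2 = lD by lra.
  have -> : (lA + lD) / 2 + (lA - lD) / 2 = lA by lra.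
  by rewrite clA clD.
have YZ : sin ((A + Dd) / 2) * sin ((Dd - A) / 2) = (cA - cD) / 2.
  rewrite sin_prod.
  have -> : (A + Dd) / 2 - (Dd - A) / 2 = A by lra.
  have -> : (A + Dd) / 2 + (Dd - A) / 2 = Dd by lra.
  by rewrite cAe cDe.
have e2' : u * sin ((Dd - A) / 2) = sin ((lA - lD) / 2).
  apply: (mulfI (lt0r_neq0 Xpos)); rewrite XW.
  have -> : sin ((lA + lD) / 2) * (u * sin ((Dd - A) / 2)) =
     u ^+ 2 * (sin ((A + Dd) / 2) * sin ((Dd - A) / 2)) by rewrite -uYX; ring.
  by rewrite YZ hu2 h6'; field; rewrite hD0 hk0.
have gen : forall x cx (s : R), x ^+ 2 < 1 -> cx ^+ 2 < 1 ->
    D * (1 - cx ^+ 2) = k ^+ 2 * (1 - x ^+ 2) ->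
    u = Num.sqrt (1 - x ^+ 2) / Num.sqrt (1 - cx ^+ 2).
  move=> x cx _ hx hcx hh.
  have [p1 p2] := sqpos x hx; have [q1 q2] := sqpos cx hcx.
  have h : u * Num.sqrt (1 - cx ^+ 2) = Num.sqrt (1 - x ^+ 2).
    apply: sqr_eq; [by rewrite mulr_ge0 // ltW | exact: ltW |].
    rewrite exprMn p2 q2 hu2.
    have -> : 1 - cx ^+ 2 = k ^+ 2 * (1 - x ^+ 2) / D by rewrite -hh [D * _]mulrC mulfK.
    by field; rewrite hD0 hk0.
  by rewrite -h mulfK // lt0r_neq0.
have e3 : u = sin lB / sin B by rewrite slB sBe; apply: gen.
have e4 : u = sin lC / sin C by rewrite slC sCe; apply: gen.
have uw : u * w = 1.
  apply: sqr_eq; [by rewrite mulr_ge0 | by [] |].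
  by rewrite exprMn hu2 hw2 expr1n; field; rewrite hD0 hk0.
have w0 : w != 0 by apply/eqP => e; move: uw; rewrite e mulr0 => /eqP; rewrite eq_sym oner_eq0.
split => //.
by rewrite -(mulfK w0 u) uw mul1r.
Qed.

Lemma neg_sq_eq x y : x < 0 -> y < 0 -> x ^+ 2 = y ^+ 2 -> x = y.
Proof.
move=> hx hy h; apply: oppr_inj; apply: sqr_eq; rewrite ?oppr_ge0 ?ltW //.
by rewrite !sqrrN.
Qed.

Lemma alg2 (a b c d D e0 e1 e2 e3 c00 c11 c22 c33 c01 c23 c13 c12
   dv01 dv23 dv13 dv12 DV g00 g22 : R) :
  a ^+ 2 < 1 -> b ^+ 2 < 1 -> c ^+ 2 < 1 -> d ^+ 2 < 1 ->
  0 < D -> e0 < 0 -> e1 < 0 -> e2 < 0 -> e3 < 0 ->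
  c11 = c00 -> c33 = c22 ->
  c11 * c33 - c13 ^+ 2 = D * (1 - b ^+ 2) ->
  c11 * c22 - c12 ^+ 2 = D * (1 - c ^+ 2) ->
  c22 * c33 - c23 ^+ 2 = D * (1 - a ^+ 2) ->
  c00 * c11 - c01 ^+ 2 = D * (1 - d ^+ 2) ->
  c00 * c22 - c01 * c23 = D * (1 - a * d) ->
  c01 * c22 - c23 * c00 = D * (d - a) ->
  D * 1 = e0 * c00 * e0 -> D * 1 = e1 * c11 * e1 ->
  D * 1 = e2 * c22 * e2 -> D * 1 = e3 * c33 * e3 ->
  D * dv23 = e2 * c23 * e3 -> D * dv01 = e0 * c01 * e1 ->
  D * dv13 = e1 * c13 * e3 -> D * dv12 = e1 * c12 * e2 ->
  DV * 1 = e0 * g00 * e0 -> DV * 1 = e2 * g22 * e2 ->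
  DV * D = (e0 * e1 * e2 * e3) ^+ 2 ->
  let u := Num.sqrt (c00 * c22 / D) in let w := Num.sqrt (g00 * g22 / DV) in
  let lA := acos a in let lB := acos b in let lC := acos c in let lD := acos d in
  let A := acos (- dv23) in let B := acos (- dv13) in let C := acos (- dv12) in
  let Dd := acos (- dv01) in
  [/\ u = sin ((lA + lD) / 2) / sin ((A + Dd) / 2),
      u * sin ((Dd - A) / 2) = sin ((lA - lD) / 2),
      u = sin lB / sin B,
      u = sin lC / sin C &
      u = w^-1].
Proof.
move=> ha hb hc hd hD he0 he1 he2 he3 c11E c33E iB iC iA iD iAD iDA
  d0 d1 d2 d3 v23 v01 v13 v12 g0 g2 hDV u w.
rewrite mulr1 in d0 d1 d2 d3 g0 g2.
have n0 : e0 != 0 by rewrite ltr0_neq0.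
have n2 : e2 != 0 by rewrite ltr0_neq0.
have hD0 : D != 0 by rewrite lt0r_neq0.
have hc00 : c00 = D / e0 ^+ 2 by rewrite d0; field.
have hc22 : c22 = D / e2 ^+ 2 by rewrite d2; field.
have c00n : c00 != 0 by rewrite hc00 mulf_neq0 // invr_eq0 expf_neq0.
have c22n : c22 != 0 by rewrite hc22 mulf_neq0 // invr_eq0 expf_neq0.
have e10 : e1 = e0.
  apply: neg_sq_eq => //; apply: (mulIf c00n).
  have t1 : e1 ^+ 2 * c00 = D by rewrite d1 c11E; ring.
  have t0 : e0 ^+ 2 * c00 = D by rewrite d0; ring.
  by rewrite t1 t0.
have e32 : e3 = e2.
  apply: neg_sq_eq => //; apply: (mulIf c22n).
  have t1 : e3 ^+ 2 * c22 = D by rewrite d3 c33E; ring.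
  have t0 : e2 ^+ 2 * c22 = D by rewrite d2; ring.
  by rewrite t1 t0.
subst e1 e3.
rewrite c11E c33E in iB iC iA iD.
have hc23 : c23 = (- (- dv23)) * D / e2 ^+ 2 by rewrite opprK [dv23 * D]mulrC v23; field; rewrite ?n0 ?n2.
have hc01 : c01 = (- (- dv01)) * D / e0 ^+ 2 by rewrite opprK [dv01 * D]mulrC v01; field; rewrite ?n0 ?n2.
have hc13 : c13 = (- (- dv13)) * D / (e0 * e2) by rewrite opprK [dv13 * D]mulrC v13; field; rewrite ?n0 ?n2.
have hc12 : c12 = (- (- dv12)) * D / (e0 * e2) by rewrite opprK [dv12 * D]mulrC v12; field; rewrite ?n0 ?n2.
subst c23 c01 c13 c12.
rewrite hc00 hc22 in iB iC iA iD iAD iDA.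
set k := e0 * e2.
have hk : 0 < k by rewrite /k nmulr_rgt0.
have hk0 : k != 0 by rewrite lt0r_neq0.
have hk2 : k ^+ 2 = e0 ^+ 2 * e2 ^+ 2 by rewrite /k exprMn.
have fact : forall (X Y : R), X = D * Y -> Y = X / D.
  by move=> X Y ->; field.
have {}iB := fact _ _ iB; have {}iC := fact _ _ iC; have {}iA := fact _ _ iA.
have {}iD := fact _ _ iD; have {}iAD := fact _ _ iAD; have {}iDA := fact _ _ iDA.
have hu : 0 <= u by apply: sqrtr_ge0.
have hw : 0 <= w by apply: sqrtr_ge0.
have hDV2 : DV = k ^+ 4 / D.
  by apply: (mulIf hD0); rewrite hDV /k; field.
have hu2 : u ^+ 2 = D / k ^+ 2.
  have e0s : 0 < e0 ^+ 2 by rewrite exprn_even_gt0.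
  have e2s : 0 < e2 ^+ 2 by rewrite exprn_even_gt0.
  rewrite sqr_sqrtr; last first.
    by apply: divr_ge0; [apply: mulr_ge0; rewrite ?hc00 ?hc22 ltW // divr_gt0 | exact: ltW].
  by rewrite hc00 hc22 hk2; field; rewrite n0 n2 hD0.
have hw2 : w ^+ 2 = k ^+ 2 / D.
  have hg0 : g00 = DV / e0 ^+ 2 by rewrite -[DV]mulr1 g0; field.
  have hg2 : g22 = DV / e2 ^+ 2 by rewrite -[DV]mulr1 g2; field.
  have hDVp : 0 <= DV by rewrite hDV2 divr_ge0 ?ltW ?exprn_gt0.
  rewrite sqr_sqrtr; last by apply: divr_ge0 => //; apply: mulr_ge0; [rewrite hg0|rewrite hg2]; apply: divr_ge0 => //; exact: sqr_ge0.
  by rewrite hg0 hg2 hDV2 hk2 /k; field; rewrite hD0 n0 n2.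
apply: (@alg a b c d _ _ _ _ D k e0 e2 u w) => //.
- by rewrite iB hk2; field; rewrite hD0 n0 n2.
- by rewrite iC hk2; field; rewrite hD0 n0 n2.
- by rewrite iA; field; rewrite hD0 n2.
- by rewrite iD; field; rewrite hD0 n0.
- by rewrite iAD hk2; field; rewrite hD0 n0 n2.
- by rewrite iDA hk2; field; rewrite hD0 n0 n2.
Qed.

Implicit Types (p v : 'I_4 -> 'rV[R]_4).

Lemma dotvE (x y : 'rV[R]_4) : dotv x y = \sum_k x 0 k * y 0 k.
Proof. by rewrite /dotv !mxE; apply: eq_bigr => k _; rewrite mxE. Qed.

Lemma dotvC (x y : 'rV[R]_4) : dotv x y = dotv y x.
Proof. by rewrite !dotvE; apply: eq_bigr => k _; rewrite mulrC. Qed.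

Lemma dotM (x y : 'I_4 -> 'rV[R]_4) :
  (\matrix_(i, j) x i 0 j) *m (\matrix_(i, j) y i 0 j)^T = \matrix_(i, j) dotv (x i) (y j).
Proof.
by apply/matrixP => i j; rewrite !mxE dotvE; apply: eq_bigr => k _; rewrite !mxE.
Qed.

Lemma sq_expand (x y : 'rV[R]_4) (s : R) :
  \sum_k (x 0 k - s * y 0 k) ^+ 2 = dotv x x - 2 * s * dotv x y + s ^+ 2 * dotv y y.
Proof.
rewrite !dotvE !mulr_sumr -sumrB -big_split /=; apply: eq_bigr => k _; ring.
Qed.

Lemma dot_le1 (x y : 'rV[R]_4) : dotv x x = 1 -> dotv y y = 1 -> dotv x y ^+ 2 <= 1.
Proof.
move=> hx hy.
have h1 := sq_expand x y 1; have h2 := sq_expand x y (-1).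
have g1 : 0 <= \sum_k (x 0 k - 1 * y 0 k) ^+ 2 by apply: sumr_ge0 => k _; exact: sqr_ge0.
have g2 : 0 <= \sum_k (x 0 k - (-1) * y 0 k) ^+ 2 by apply: sumr_ge0 => k _; exact: sqr_ge0.
rewrite h1 hx hy in g1; rewrite h2 hx hy in g2.
nra.
Qed.

Lemma dot_strict p (i j : 'I_4) :
  (forall k, dotv (p k) (p k) = 1) -> \det (\matrix_(i, j) p i 0 j) != 0 ->
  i != j -> dotv (p i) (p j) ^+ 2 < 1.
Proof.
move=> hu hdet ij.
rewrite lt_neqAle dot_le1 ?hu // andbT; apply/negP => /eqP h.
set s := dotv (p i) (p j).
have h0 : \sum_k (p i 0 k - s * p j 0 k) ^+ 2 = 0.
  move: h; rewrite -/s => h.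
  rewrite sq_expand !hu -/s -mulrA -expr2 mulr1 h; ring.
have hk : forall k, p i 0 k = s * p j 0 k.
  move=> k; apply/eqP; rewrite -subr_eq0 -sqrf_eq0; apply/eqP.
  by move: (psumr_eq0P (fun k _ => sqr_ge0 (p i 0 k - s * p j 0 k)) h0) => /(_ k isT).
set P := \matrix_(i, j) p i 0 j.
have Pu : P \in unitmx by rewrite unitmxE unitfE.
set z : 'rV[R]_4 := delta_mx 0 i - s *: delta_mx 0 j.
have hz : z *m P = 0.
  rewrite mulmxBl -scalemxAl -!rowE; apply/rowP => k; rewrite !mxE hk; ring.
have z0 : z = 0 by rewrite -(mulmxK Pu z) hz mul0mx.
have : z 0 i = 0 by rewrite z0 mxE.
by rewrite !mxE !eqxx (negbTE ij) /= mulr0 subr0 => /eqP; rewrite oner_eq0.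
Qed.

Lemma ord4 (i : 'I_4) : i = i0 \/ i = i1 \/ i = i2 \/ i = i3.
Proof.
case: i => [[|[|[|[|k]]]] hk].
- by left; apply/val_inj.
- by right; left; apply/val_inj.
- by right; right; left; apply/val_inj.
- by right; right; right; apply/val_inj.
- by [].
Qed.

Lemma key_entry (X Y : 'M[R]_4) (d : 'rV[R]_4) i j :
  X *m Y^T = diag_mx d -> \det Y != 0 ->
  \det (Y *m Y^T) * (X *m X^T) i j = d 0 i * cofactor (Y *m Y^T) j i * d 0 j.
Proof.
move=> h1 h2; have := @key 3 X Y d h1 h2.
rewrite mul_diag_mx mul_mx_diag => /matrixP /(_ i j).
by rewrite !mxE.
Qed.

Theorem main p v :
  spherical_tetrahedron p ->
  (forall i, outer_unit_normal p v i) ->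
  Z2_symmetric p ->
  let lA := edge_len p i0 i1 in let lB := edge_len p i0 i2 in
  let lC := edge_len p i0 i3 in let lD := edge_len p i2 i3 in
  let A := dihedral v i2 i3 in let B := dihedral v i1 i3 in
  let C := dihedral v i1 i2 in let D := dihedral v i0 i1 in
  let Gs := edge_matrix p in let G := gram_matrix v in
  let u := Num.sqrt (cofactor Gs i0 i0 * cofactor Gs i2 i2 / \det Gs) in
  let w := Num.sqrt (cofactor G i0 i0 * cofactor G i2 i2 / \det G) in
  [/\ u = sin ((lA + lD) / 2) / sin ((A + D) / 2),
      u * sin ((D - A) / 2) = sin ((lA - lD) / 2),
      u = sin lB / sin B,
      u = sin lC / sin C &
      u = w^-1].
Proof.
move=> [hu hdet] hn [M [HM [m0 m1 m2 m3]]].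
have hM : forall x y : 'rV[R]_4, dotv (x *m M) (y *m M) = dotv x y.
  by move=> x y; rewrite /dotv trmx_mul !mulmxA -(mulmxA x) HM mulmx1.
have h13 : dotv (p i1) (p i3) = dotv (p i0) (p i2) by rewrite -m0 -m2 hM.
have h12 : dotv (p i1) (p i2) = dotv (p i0) (p i3) by rewrite -m0 -m3 hM.
set P := \matrix_(i, j) p i 0 j.
set V := \matrix_(i, j) v i 0 j.
set a := dotv (p i0) (p i1); set b := dotv (p i0) (p i2).
set c := dotv (p i0) (p i3); set d := dotv (p i2) (p i3).
have hvu : forall i, dotv (v i) (v i) = 1 by move=> i; case: (hn i).
have bnd : forall x : R, x ^+ 2 <= 1 -> x \in `[(-1), 1].
  by move=> x hx; rewrite in_itv /=; apply/andP; split; nra.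
have hGs : edge_matrix p = Qs a b c d.
  apply/matrixP => i j; rewrite !mxE.
  have -> : (if i == j then 1 else cos (edge_len p i j)) = dotv (p i) (p j).
    case: eqP => [->|_]; first by rewrite hu.
    by rewrite /edge_len acosK // bnd // dot_le1.
  have [->|[->|[->|->]]] := ord4 i; have [->|[->|[->|->]]] := ord4 j => /=;
    first [ by rewrite hu | done | by rewrite dotvC | by rewrite h13 | by rewrite h12
          | by rewrite dotvC h13 | by rewrite dotvC h12 ].
have hPQ : P *m P^T = Qs a b c d.
  rewrite -hGs dotM; apply/matrixP => i j; rewrite !mxE.
  case: eqP => [->|_]; first by rewrite hu.
  by rewrite /edge_len acosK // bnd // dot_le1.
have hG : gram_matrix v = V *m V^T.
  rewrite dotM; apply/matrixP => i j; rewrite !mxE.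
  case: eqP => [->|_]; first by rewrite hvu.
  rewrite /dihedral acosK ?opprK // bnd // sqrrN dot_le1 //.
set er : 'rV[R]_4 := \row_i dotv (v i) (p i).
have hVP : V *m P^T = diag_mx er.
  rewrite dotM; apply/matrixP => i j; rewrite !mxE.
  case: (eqVneq i j) => [<-|ne]; first by rewrite mulr1n.
  by rewrite mulr0n; case: (hn i) => _ h _; rewrite h // eq_sym.
have hPV : P *m V^T = diag_mx er by rewrite -tr_diag_mx -hVP trmx_mul trmxK.
have hdV : \det V * \det P = er 0 i0 * er 0 i1 * er 0 i2 * er 0 i3.
  rewrite -(det_tr P) -det_mulmx hVP det_diag !big_ord_recl big_ord0 mulr1 !mulrA.
  by congr (_ * _ * _ * _); apply: congr1; apply/val_inj.
have eneg : forall i, er 0 i < 0 by move=> i; rewrite mxE; case: (hn i).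
have hdetV : \det V != 0.
  have hprod : er 0 i0 * er 0 i1 * er 0 i2 * er 0 i3 != 0.
    by rewrite !mulf_neq0 // ltr0_neq0 // eneg.
  by apply/eqP => h0; move: hprod; rewrite -hdV h0 mul0r eqxx.
have K1 := fun i j => @key_entry V P er i j hVP hdet.
have K2 := fun i j => @key_entry P V er i j hPV hdetV.
rewrite hPQ in K1; rewrite -hG in K2.
have hVV : forall i j, (V *m V^T) i j = dotv (v i) (v j) by move=> i j; rewrite dotM mxE.
have hPP : forall i j, (Qs a b c d) i j = dotv (p i) (p j) by move=> i j; rewrite -hPQ dotM mxE.
have hDD : \det (gram_matrix v) * \det (Qs a b c d) = (er 0 i0 * er 0 i1 * er 0 i2 * er 0 i3) ^+ 2.
  by rewrite hG -hPQ !det_mulmx !det_tr -hdV; ring.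
have [s32 s10 s31 s21] := Qs_sym a b c d.
have [i11 i33 iB iC [iA iD iAD iDA]] := Qs_ids a b c d.
have hDpos : 0 < \det (Qs a b c d).
  by rewrite -hPQ det_mulmx det_tr -expr2 exprn_even_gt0.
move=> lA lB lC lD A B C D Gs G u w.
rewrite /u /w /Gs /G hGs.
have := @alg2 a b c d (\det (Qs a b c d)) (er 0 i0) (er 0 i1) (er 0 i2) (er 0 i3)
  (cofactor (Qs a b c d) i0 i0) (cofactor (Qs a b c d) i1 i1)
  (cofactor (Qs a b c d) i2 i2) (cofactor (Qs a b c d) i3 i3)
  (cofactor (Qs a b c d) i0 i1) (cofactor (Qs a b c d) i2 i3)
  (cofactor (Qs a b c d) i1 i3) (cofactor (Qs a b c d) i1 i2)
  (dotv (v i0) (v i1)) (dotv (v i2) (v i3)) (dotv (v i1) (v i3)) (dotv (v i1) (v i2))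
  (\det (gram_matrix v)) (cofactor (gram_matrix v) i0 i0) (cofactor (gram_matrix v) i2 i2).
apply.
all: try by apply: dot_strict.
all: try by apply: eneg.
all: try done.
all: first [ by rewrite -K1 hVV hvu
           | by rewrite -s32 -K1 hVV | by rewrite -s10 -K1 hVV
           | by rewrite -s31 -K1 hVV | by rewrite -s21 -K1 hVV
           | by rewrite -K2 dotM mxE hu ].
Qed.

End S.

Theorem proposition1 (R : realType) (p v : 'I_4 -> 'rV[R]_4) :
  spherical_tetrahedron p ->
  (forall i, outer_unit_normal p v i) ->
  Z2_symmetric p ->
  let lA := edge_len p i0 i1 in let lB := edge_len p i0 i2 in
  let lC := edge_len p i0 i3 in let lD := edge_len p i2 i3 in
  let A := dihedral v i2 i3 in let B := dihedral v i1 i3 in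
  let C := dihedral v i1 i2 in let D := dihedral v i0 i1 in
  let Gs := edge_matrix p in let G := gram_matrix v in
  let u := Num.sqrt (cofactor Gs i0 i0 * cofactor Gs i2 i2 / \det Gs) in
  let w := Num.sqrt (cofactor G i0 i0 * cofactor G i2 i2 / \det G) in
  [/\ u = sin ((lA + lD) / 2) / sin ((A + D) / 2),
      u * sin ((D - A) / 2) = sin ((lA - lD) / 2),
      u = sin lB / sin B,
      u = sin lC / sin C &
      u = w^-1].
Proof. exact: main. Qed.
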